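(* Let $C$ be a smooth projective curve of genus $g\ge1$ over $\mathbb{C}$, $P,Q,R\in C$ distinct, and $f$ a rational function with $\operatorname{div}(f)=NQ-NR$, $N\ge1$, $f(P)=1$. Let $C_{QR}=C\setminus\{Q,R\}$, and let $G\subset\pi_1(C_{QR},P)$ be the subgroup generated by the loops $\alpha_i={\alpha'_i}^N\beta_Q^{-m_i}$, $1\le i\le 2g$, described in the context. Then the abelianization of $G$ is isomorphic to the subgroup of index $N^{2g}$ of the abelianization of $\pi_1(C,P)$ given by multiplication by $N$: $$G/[G,G]\cong N\cdot\big(\pi_1(C,P)/[\pi_1(C,P),\pi_1(C,P)]\big).$$
   Context: The group $\pi_1(C_{QR},P)$ is free on $2g+1$ generators $\alpha'_1,\dots,\alpha'_{2g},\beta_Q$, where the $\alpha'_i$ are loops based at $P$ coming from the edges of the fundamental $4g$-gon of $C$ (so that their images under the inclusion $i:C_{QR}\hookrightarrow C$ are the standard generators of $\pi_1(C,P)$, subject to the single product-of-commutators relation), and $\beta_Q$ is a small simple loop around $Q$ based at $P$. The map $f:C_{QR}\to\mathbb{P}^1\setminus\{0,\infty\}$ induces $f_*:\pi_1(C_{QR},P)\to\pi_1(\mathbb{P}^1\setminus\{0,\infty\},1)\cong\mathbb{Z}=\langle\beta_0\rangle$, with $f_*(\beta_Q)=\beta_0^N$; define integers $m_i$ by $f_*(\alpha'_i)=\beta_0^{m_i}$, so that $\alpha_i={\alpha'_i}^N\beta_Q^{-m_i}$ lies in $\ker f_*$. *)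

(* Defs.v *)
From mathcomp Require Import all_boot all_order all_algebra.
Set Implicit Arguments. Unset Strict Implicit. Unset Printing Implicit Defensive.
Import GRing.Theory.

(* Free group on n generators, realized by words over letters (i, b):
   b = false is the generator x_i, b = true is its inverse x_i^-1.
   Two words represent the same free-group element iff their free
   reductions coincide. Product = concatenation, inverse = fg_inv. *)
Definition letter (n : nat) := ('I_n * bool)%type.
Definition word (n : nat) := seq (letter n).

Definition inv_letter n (x : letter n) : letter n := (x.1, ~~ x.2).

Fixpoint reduce n (w : word n) : word n :=
  match w with
  | [::] => [::]
  | x :: w' =>
      let r := reduce w' in
      match r with
      | y :: r' => if y == inv_letter x then r' else x :: r
      | [::] => [:: x]
      end
  end.

Definition fg_eq n (w1 w2 : word n) : bool := reduce w1 == reduce w2.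
Definition fg_inv n (w : word n) : word n := rev (map (@inv_letter n) w).
Definition fg_pow n (w : word n) (k : int) : word n :=
  match k with
  | Posz j => flatten (nseq j w)
  | Negz j => flatten (nseq j.+1 (fg_inv w))
  end.
Definition fg_gen n (i : 'I_n) : word n := [:: (i, false)].
Definition fg_comm n (x y : word n) : word n :=
  fg_inv x ++ fg_inv y ++ x ++ y.

Definition in_span n k (gens : 'I_k -> word n) (w : word n) : Prop :=
  exists s : seq ('I_k * bool),
    fg_eq w (flatten (map (fun p => if p.2 then fg_inv (gens p.1) else gens p.1) s)).

Definition in_comm n (H : word n -> Prop) (w : word n) : Prop :=
  exists s : seq ((word n * word n) * bool),
    (forall p, p \in s -> H p.1.1 /\ H p.1.2) /\
    fg_eq w (flatten (map (fun p => if p.2 then fg_inv (fg_comm p.1.1 p.1.2)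
                                    else fg_comm p.1.1 p.1.2) s)).

(* Main.v *)
Require Import Defs.
From mathcomp Require Import all_boot all_order all_algebra zify.
Import GRing.Theory Num.Theory.
Local Open Scope ring_scope.
Local Open Scope ring_scope.

Section Red.
Variable n : nat.
Implicit Types (x y : letter n) (w u v : word n).

Lemma inv_letterK : involutive (@inv_letter n).
Proof. by case=> i b; rewrite /inv_letter /= negbK. Qed.

Definition step x (r : word n) := match r with
  | y :: r' => if y == inv_letter x then r' else x :: r | [::] => [:: x] end.

Lemma reduce_cons x w : reduce (x :: w) = step x (reduce w).
Proof. by []. Qed.

Fixpoint irred (w : word n) : bool := match w with
 | x :: ((y :: _) as t) => (y != inv_letter x) && irred t
 | _ => true end.

Lemma irred_reduce w : irred (reduce w).
Proof.
elim: w => [|x w IH] //.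
rewrite reduce_cons /step; case E: (reduce w) IH => [|y r'] // H.
case: ifP => Hy.
  by case: r' H {E} => [|z r''] //= /andP[].
by rewrite /= Hy.
Qed.

Lemma reduce_cancel x w : reduce (inv_letter x :: x :: w) = reduce w.
Proof.
have := irred_reduce w; rewrite !reduce_cons /step.
case E: (reduce w) => [|y r]; first by rewrite inv_letterK eqxx.
case: ifP => [/eqP Hy | Hy] Hir; last by rewrite inv_letterK eqxx.
case: r E Hir => [|z r'] E Hir; first by rewrite Hy.
move: Hir => /= /andP[Hz _].
by subst y; rewrite /= (negbTE Hz).
Qed.

Lemma reduce_catl u v w : reduce v = reduce w -> reduce (u ++ v) = reduce (u ++ w).
Proof.
elim: u => [|x u IH] H; first exact H.
by rewrite !cat_cons !reduce_cons (IH H).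
Qed.

Lemma fg_inv_cat u v : fg_inv (u ++ v) = fg_inv v ++ fg_inv u.
Proof. by rewrite /fg_inv map_cat rev_cat. Qed.

Lemma fg_invK : involutive (@fg_inv n).
Proof.
move=> w; rewrite /fg_inv map_rev revK -map_comp.
by rewrite (eq_map (g := id)) ?map_id // => x /=; rewrite inv_letterK.
Qed.

Lemma fg_inv_cons x w : fg_inv (x :: w) = fg_inv w ++ [:: inv_letter x].
Proof. by rewrite /fg_inv /= rev_cons -cats1. Qed.

Lemma reduce_invcancel u w : reduce (fg_inv u ++ u ++ w) = reduce w.
Proof.
elim: u => [|x u IH] //.
rewrite fg_inv_cons -catA.
have -> : [:: inv_letter x] ++ (x :: u) ++ w = inv_letter x :: x :: u ++ w by [].
by rewrite (reduce_catl (fg_inv u) _ _ (reduce_cancel x (u ++ w))).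
Qed.

Lemma fg_eq_trans u v w : fg_eq u v -> fg_eq v w -> fg_eq u w.
Proof. by rewrite /fg_eq => /eqP -> /eqP ->. Qed.
Lemma fg_eq_sym u v : fg_eq u v -> fg_eq v u.
Proof. by rewrite /fg_eq eq_sym. Qed.
End Red.


Definition ev (k : nat) (i : nat) : 'rV[int]_k := \row_(j < k) ((i == j)%:R).
Definition sg (b : bool) : int := if b then -1 else 1.
Definition cl n k (l : letter n) : 'rV[int]_k := sg l.2 *: ev k l.1.
Definition phi n k (w : word n) : 'rV[int]_k := \sum_(l <- w) cl n k l.

Section Phi.
Variables n k : nat.
Implicit Types (x y : letter n) (w u v : word n).

Lemma phi_cat u v : phi n k (u ++ v) = phi n k u + phi n k v.
Proof. by rewrite /phi big_cat. Qed.

Lemma cl_inv x : cl n k (inv_letter x) = - cl n k x.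
Proof. by case: x => i [] ; rewrite /cl /sg /= ?scaleNr ?opprK ?scale1r. Qed.

Lemma phi_inv w : phi n k (fg_inv w) = - phi n k w.
Proof.
rewrite /phi /fg_inv big_rev big_map -sumrN.
by apply: eq_bigr => x _; rewrite cl_inv.
Qed.

Lemma phi_reduce w : phi n k (reduce w) = phi n k w.
Proof.
elim: w => [|x w IH] //.
rewrite reduce_cons /step /phi big_cons -/(phi n k w) -IH /phi.
case E: (reduce w) => [|y r]; first by rewrite !big_cons !big_nil.
case: ifP => [/eqP Hy|_]; last by rewrite !big_cons.
by rewrite big_cons Hy cl_inv addrA subrr add0r.
Qed.

Lemma phi_fg_eq u v : fg_eq u v -> phi n k u = phi n k v.
Proof. by move=> /eqP H; rewrite -phi_reduce H phi_reduce. Qed.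

Lemma phi_pow w (z : int) : phi n k (fg_pow w z) = z *: phi n k w.
Proof.
have H m u : phi n k (flatten (nseq m u)) = m%:R *: phi n k u.
  elim: m => [|m IH]; first by rewrite scale0r /phi big_nil.
  by rewrite /= phi_cat IH -{1}(scale1r (phi n k u)) -scalerDl -mulrS.
case: z => j; rewrite /fg_pow; first by rewrite H natz.
by rewrite H phi_inv NegzE scalerN scaleNr natz.
Qed.

Lemma phi_comm u v : phi n k (fg_comm u v) = 0.
Proof.
rewrite /fg_comm !phi_cat !phi_inv.
by rewrite (addrC (phi n k u)) addKr addNr.
Qed.
End Phi.

Section Comm.
Variables n K : nat.
Variable gens : 'I_K -> word n.
Definition fgen (p : 'I_K * bool) := if p.2 then fg_inv (gens p.1) else gens p.1.
Definition flat (s : seq ('I_K * bool)) := flatten (map fgen s).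
Definition cnt (s : seq ('I_K * bool)) : 'rV[int]_K := \sum_(p <- s) sg p.2 *: ev K p.1.

Lemma flat_cat s t : flat (s ++ t) = flat s ++ flat t.
Proof. by rewrite /flat map_cat flatten_cat. Qed.

Lemma fgen_flip p : fgen (p.1, ~~ p.2) = fg_inv (fgen p).
Proof. by case: p => i []; rewrite /fgen /= ?fg_invK. Qed.

Lemma span_flat s : in_span gens (flat s).
Proof. by exists s; rewrite /fg_eq. Qed.

Lemma fg_inv_flat s : fg_inv (flat s) = flat (rev (map (fun p => (p.1, ~~ p.2)) s)).
Proof.
elim: s => [|p s IH] //.
rewrite /= rev_cons -cats1 flat_cat -IH fg_inv_cat /flat /= cats0.
by rewrite fgen_flip.
Qed.

Lemma cnt_coord s j : (cnt s) 0 j = \sum_(q <- s) sg q.2 * ((q.1 : nat) == j)%:R.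
Proof. by rewrite /cnt summxE; apply: eq_bigr => q _; rewrite !mxE. Qed.

Lemma partner p s : cnt (p :: s) = 0 -> (p.1, ~~ p.2) \in s.
Proof.
move=> H; apply: contraT => Hn.
have E : forall t, (p.1, ~~ p.2) \notin t ->
   \sum_(q <- t) sg q.2 * ((q.1 : nat) == p.1)%:R = sg p.2 * (count (fun q : 'I_K * bool => (q.1 : nat) == p.1) t)%:R.
  elim=> [|q t IH]; first by rewrite big_nil mulr0.
  rewrite in_cons negb_or => /andP[Hq Ht].
  rewrite big_cons IH //= natrD mulrDr; congr (_ + _).
  case: (eqVneq (q.1 : nat) p.1) => Hqp; last by rewrite !mulr0.
  case: q Hq Hqp => i b /= Hq Hqp.
  have Hi : i = p.1 by apply: val_inj.
  subst i; case: b Hq; case: (p.2) => //=; rewrite ?eqxx //.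
have := congr1 (fun M : 'rV[int]_K => M 0 p.1) H.
rewrite cnt_coord big_cons E // mxE eqxx -mulrDr.
move/eqP; rewrite mulf_eq0 => /orP[]; first by case: (p.2).
by rewrite -natrD pnatr_eq0 add1n.
Qed.

Lemma comm_main s : cnt s = 0 -> in_comm (in_span gens) (flat s).
Proof.
have [l] := ubnP (size s); elim: l s => // l IH [|p s'] Hs Hc.
  by exists [::]; rewrite /fg_eq.
have HH := partner _ _ Hc; move: HH Hc Hs; case/splitPr => u v Hc Hs.
have Hc' : cnt (u ++ v) = 0.
  move: Hc; rewrite /cnt !big_cons !big_cat big_cons /=.
  rewrite addrA addrCA addrA /sg; case: (p.2) => /=;
  by rewrite scaleN1r scale1r ?addrK ?subrK.
have [|t [Ht Heq]] := IH (u ++ v) _ Hc'.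
  by move: Hs; rewrite /= !size_cat /=; lia.
set y := fgen p; set U := flat u; set V := flat v.
exists (((fg_inv y, fg_inv U), false) :: t); split.
  move=> q; rewrite in_cons => /orP[/eqP -> | /Ht //]; split => /=.
    by rewrite /y -fgen_flip; exists [:: (p.1, ~~ p.2)]; rewrite /fg_eq /flat /= cats0.
  by rewrite /U fg_inv_flat; apply: span_flat.
rewrite /fg_eq /= /fg_comm !fg_invK.
have -> : flat (p :: u ++ (p.1, ~~ p.2) :: v) = y ++ U ++ fg_inv y ++ V.
  by rewrite /flat /= map_cat flatten_cat /= fgen_flip.
rewrite -!catA; apply/eqP.
do 3! apply: reduce_catl.
move: Heq; rewrite /fg_eq flat_cat => /eqP Heq.
by rewrite -(@reduce_catl _ (fg_inv U) _ _ Heq) reduce_invcancel.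
Qed.
End Comm.


Lemma sum_nseq (V : zmodType) (T : Type) (m : nat) (a : T) (F : T -> V) :
  \sum_(p <- nseq m a) F p = F a *+ m.
Proof. elim: m => [|m IH]; first by rewrite big_nil. by rewrite big_cons IH mulrS. Qed.

Lemma sg_abs (x : int) : sg (x < 0) *+ `|x|%N = x.
Proof.
case: x => m.
  by rewrite /sg /= natz.
by rewrite NegzE /sg /= mulNrn natz.
Qed.

Lemma cnt_build K (u : 'rV[int]_K) :
  cnt _ (flatten [seq nseq `|u ord0 j|%N (j, u ord0 j < 0) | j <- enum 'I_K]) = u.
Proof.
rewrite /cnt big_flatten big_map /=.
under eq_bigr => j _ do rewrite sum_nseq /= scalerMnl sg_abs.
apply/rowP => j'; rewrite summxE (bigD1_seq j') ?mem_enum ?enum_uniq //=.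
rewrite big1_seq ?addr0; first by rewrite !mxE eqxx mulr1.
move=> i /andP[Hi _]; rewrite !mxE; case: eqP => [/ord_inj E|]; last by rewrite mulr0.
by rewrite E eqxx in Hi.
Qed.

Lemma phi_comm_flat n k (t : seq (word n * word n * bool)) :
  phi n k (flatten [seq (if p.2 then fg_inv (fg_comm p.1.1 p.1.2) else fg_comm p.1.1 p.1.2) | p <- t]) = 0.
Proof.
elim: t => [|q t IH]; first by rewrite /phi big_nil.
rewrite /= phi_cat IH addr0; case: (q.2); rewrite ?phi_inv phi_comm ?oppr0 //.
Qed.

Theorem mainTheorem4 (g N : nat) (hg : (1 <= g)%N) (hN : (1 <= N)%N)
    (m : 'I_(2 * g) -> int) :
  let alphaP (i : 'I_(2 * g)) : word (2 * g).+1 :=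
    fg_gen (widen_ord (leqnSn (2 * g)) i) in
  let betaQ : word (2 * g).+1 := fg_gen ord_max in
  let alpha (i : 'I_(2 * g)) : word (2 * g).+1 :=
    fg_pow (alphaP i) (N%:Z) ++ fg_pow betaQ (- m i) in
  let G := in_span alpha in
  exists phi : word (2 * g).+1 -> 'rV[int]_(2 * g),
    (forall x y, G x -> G y -> phi (x ++ y) = phi x + phi y) /\
    (forall x y, G x -> fg_eq x y -> phi x = phi y) /\
    (forall v : 'rV[int]_(2 * g),
        (exists x, G x /\ phi x = v) <-> (exists u : 'rV[int]_(2 * g), v = N%:Z *: u)) /\
    (forall x, G x -> (phi x = 0 <-> in_comm G x)).
Proof.
move=> alphaP betaQ alpha G.
exists (phi (2 * g).+1 (2 * g)).
have Hev0 : ev (2 * g) (2 * g) = 0.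
  by apply/rowP => j; rewrite !mxE (gtn_eqF (ltn_ord j)).
have Halpha i : phi _ (2 * g) (alpha i) = N%:Z *: ev (2 * g) i.
  rewrite /alpha phi_cat !phi_pow /alphaP /betaQ /phi /fg_gen !big_cons !big_nil /cl /=.
  rewrite Hev0 !scale1r; by rewrite !GRing.addr0 scaler0 GRing.addr0.
have Hflat s : phi _ (2 * g) (@flat _ _ alpha s) = N%:Z *: cnt _ s.
  elim: s => [|p s IH]; first by rewrite /flat /phi /cnt !big_nil scaler0.
  rewrite /flat /= phi_cat -/(@flat _ _ alpha s) IH /cnt big_cons scalerDr; congr (_ + _).
  rewrite /fgen /sg; case: (p.2); rewrite ?phi_inv Halpha ?scaleN1r ?scale1r ?scalerN //.
split; first by move=> x y _ _; exact: phi_cat.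
split; first by move=> x y _; exact: phi_fg_eq.
split.
  move=> v0; split.
    case=> x [[s Hs] <-]; exists (cnt _ s); rewrite (phi_fg_eq _ _ _ _ Hs); exact: Hflat.
  case=> u ->.
  set s := flatten [seq nseq `|u ord0 j|%N (j, u ord0 j < 0) | j <- enum 'I_(2 * g)].
  exists (@flat _ _ alpha s); split; first by exists s; rewrite /fg_eq.
  by rewrite Hflat cnt_build.
move=> x [s Hs]; split.
  move=> H0.
  have Hc : cnt _ s = 0.
    have HN : N%:Z != 0 by case: (N) hN.
    apply/rowP => j; have := congr1 (fun M : 'rV[int]_(2 * g) => M 0 j) H0.
    rewrite (phi_fg_eq _ _ _ _ Hs) (Hflat s) !mxE => /eqP; rewrite mulf_eq0 (negbTE HN) /=.
    by move/eqP.
  have [t [Ht Heq]] := comm_main _ _ alpha _ Hc.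
  by exists t; split => //; exact: fg_eq_trans _ _ _ _ Hs Heq.
case=> t [_ Ht]; rewrite (phi_fg_eq _ _ _ _ Ht); exact: phi_comm_flat.
Qed.
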